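(* Let $n\ge 16$ be even and let $W_{4,n}$ be the $4$-regular Kn\''odel graph. If $n\equiv 0\pmod{10}$ or $n\equiv 4 \pmod{10}$, then $W_{4,n}$ is $\gamma$-stable.
   Context: For an even integer $n\ge 2$ and $1\le\Delta\le\lfloor\log_2 n\rfloor$, the Kn\''odel graph $W_{\Delta,n}$ is the $\Delta$-regular bipartite graph on the $n$ vertices $(i,j)$, $i\in\{1,2\}$, $0\le j\le n/2-1$, in which for every $j$ the vertex $(1,j)$ is adjacent to the vertices $(2,(j+2^k-1)\bmod (n/2))$ for $k=0,1,\dots,\Delta-1$ (and there are no other edges); in particular $W_{4,n}$ is defined for even $n\ge 16$. A set $D$ of vertices of a graph $G$ is dominating if every vertex not in $D$ is adjacent to a vertex of $D$; $\gamma(G)$ is the minimum size of a dominating set. A graph $G$ is $\gamma$-stable if $\gamma(G-u)=\gamma(G)$ for every vertex $u$ of $G$, where $G-u$ is the graph obtained by deleting $u$. *)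

(* Defs.v *)
From mathcomp Require Import all_boot.
Set Implicit Arguments. Unset Strict Implicit. Unset Printing Implicit Defensive.

(* Knodel graph W_{Delta,n} with m = n/2.  Vertex (i,j), i in {1,2}, is
   encoded as (b, j) with b = false for i = 1 and b = true for i = 2,
   j : 'I_m.  (1,j) ~ (2, (j + 2^k - 1) mod m) for k = 0..Delta-1. *)
Definition knodel_vertex (m : nat) := (bool * 'I_m)%type.

Definition knodel_arc (Delta m : nat) (j j' : 'I_m) : bool :=
  [exists k : 'I_Delta, val j' == (val j + 2 ^ val k - 1) %% m].

Definition knodel_adj (Delta m : nat) : rel (knodel_vertex m) :=
  fun x y =>
    match x, y with
    | (false, j), (true, j') => knodel_arc Delta j j'
    | (true, j'), (false, j) => knodel_arc Delta j j'
    | _, _ => false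
    end.

(* Domination in the induced subgraph G[V] (G given by a relation e). *)
Definition dominating (T : finType) (e : rel T) (V D : {set T}) : bool :=
  (D \subset V) && [forall v in V, (v \in D) || [exists u in D, e u v]].

(* domination number of G[V]; V itself is dominating, so #|V| bounds it *)
Definition gamma (T : finType) (e : rel T) (V : {set T}) : nat :=
  \big[minn/#|V|]_(D : {set T} | dominating e V D) #|D|.

Definition gamma_stable (T : finType) (e : rel T) : Prop :=
  forall u : T, gamma e ([set: T] :\ u) = gamma e [set: T].

Definition knodel_graph_W (Delta n : nat) : rel (knodel_vertex n./2) := @knodel_adj Delta n./2.
Arguments knodel_graph_W : clear implicits.

(* Main.v *)
Require Import Defs.
From mathcomp Require Import all_boot all_order all_algebra ring zify.
Set Implicit Arguments. Unset Strict Implicit. Unset Printing Implicit Defensive.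
Import GRing.Theory.

Lemma valZn p c : val (c%:R : 'I_(p.+2))%R = c %% p.+2.
Proof. have := @val_Zp_nat p.+2 isT c. done. Qed.
Lemma valDn p (j : 'I_(p.+2)) c : val (j + c%:R)%R = (j + c) %% p.+2.
Proof. have -> : val (j + c%:R)%R = (j + val (c%:R : 'I_(p.+2))%R) %% p.+2 by [].
by rewrite valZn modnDmr. Qed.
Lemma valBn p (j : 'I_(p.+2)) c : c < p.+2 -> val (j - c%:R)%R = (j + (p.+2 - c)) %% p.+2.
Proof. move=> hc. have -> : val (j - c%:R)%R = (j + val (- (c%:R : 'I_(p.+2)))%R) %% p.+2 by [].
have -> : val (- (c%:R : 'I_(p.+2)))%R = (p.+2 - val (c%:R : 'I_(p.+2))%R) %% p.+2 by [].
by rewrite valZn (modn_small hc) modnDmr. Qed.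
Lemma card_ordP m (P : pred nat): #|[set j : 'I_m | P j]| = count P (iota 0 m).
Proof. by rewrite cardsE cardE /enum_mem size_filter -val_enum_ord count_map enumT. Qed.

Lemma gamma_le (T : finType) (e : rel T) V D : dominating e V D -> gamma e V <= #|D|.
Proof.
move=> HD; rewrite /gamma.
have : D \in index_enum {set T} by rewrite mem_index_enum.
elim: (index_enum _) => // a r IH; rewrite inE big_cons => /orP[/eqP<-|hD].
  by rewrite HD geq_minl.
by case: (dominating e V a); rewrite ?geq_min IH ?orbT.
Qed.

Lemma gamma_ge (T : finType) (e : rel T) V c :
  (forall D, dominating e V D -> c <= #|D|) -> c <= gamma e V.
Proof.
move=> H; rewrite /gamma; elim/big_ind: _ => //.
- apply: H; rewrite /dominating subxx /=; apply/forall_inP=> v ->; done.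
- by move=> x y hx hy; rewrite leq_min hx hy.
Qed.

Lemma dom_minus (T : finType) (e : rel T) D u :
  dominating e [set: T] D -> u \notin D -> dominating e ([set: T] :\ u) D.
Proof.
case/andP=> _ /forall_inP H hu; apply/andP; split.
  by apply/subsetP => x hx; rewrite !inE andbT; apply/eqP => E; rewrite -E hx in hu.
by apply/forall_inP => v _; apply: H; rewrite inE.
Qed.

Definition sh (c : nat) p (j : 'I_(p.+2)) : 'I_(p.+2) := (j + c%:R)%R.

Lemma arcE p (j j' : 'I_(p.+2)) :
  knodel_arc 4 j j' = [|| j' == sh 0 j, j' == sh 1 j, j' == sh 3 j | j' == sh 7 j].
Proof.
have E c : (j' == sh c j) = (val j' == (val j + c) %% p.+2) by rewrite -val_eqE /sh valDn.
rewrite !E /knodel_arc; apply/existsP/idP.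
  by case=> -[[|[|[|[|k]]]] hk] //= /eqP ->; rewrite -addnBA //= eqxx ?orbT.
case/or4P => h.
- by exists (@Ordinal 4 0 isT); rewrite /= -addnBA.
- by exists (@Ordinal 4 1 isT); rewrite /= -addnBA.
- by exists (@Ordinal 4 2 isT); rewrite /= -addnBA.
- by exists (@Ordinal 4 3 isT); rewrite /= -addnBA.
Qed.

Lemma adjFT p j j' : @knodel_adj 4 p.+2 (false, j) (true, j') = knodel_arc 4 j j'.
Proof. by []. Qed.
Lemma adjTF p j j' : @knodel_adj 4 p.+2 (true, j') (false, j) = knodel_arc 4 j j'.
Proof. by []. Qed.

Lemma adj_sh p (c : 'I_(p.+2)) b1 j1 b2 j2 :
  @knodel_adj 4 p.+2 (b1, (j1 + c)%R) (b2, (j2 + c)%R) = @knodel_adj 4 p.+2 (b1, j1) (b2, j2).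
Proof.
have E (x y : 'I_(p.+2)) k : ((y + c)%R == sh k (x + c)%R) = (y == sh k x).
  rewrite /sh; have -> : (x + c + k%:R = (x + k%:R) + c)%R by ring.
  by rewrite (inj_eq (addIr c)).
by case: b1; case: b2; rewrite /knodel_adj ?arcE ?E.
Qed.

Definition Aset p (D : {set knodel_vertex p.+2}) : {set 'I_(p.+2)} := [set j | (false, j) \in D].
Definition Bset p (D : {set knodel_vertex p.+2}) : {set 'I_(p.+2)} := [set j | (true, j) \in D].
Definition Pc p (B : {set 'I_(p.+2)}) (c : nat) := [set j | sh c j \in B].
Definition Qc p (A : {set 'I_(p.+2)}) (c : nat) := [set sh c j | j in A].
Definition cover1 p (D : {set knodel_vertex p.+2}) :=
  Aset D :|: (Pc (Bset D) 0 :|: (Pc (Bset D) 1 :|: (Pc (Bset D) 3 :|: Pc (Bset D) 7))).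
Definition cover2 p (D : {set knodel_vertex p.+2}) :=
  Bset D :|: (Qc (Aset D) 0 :|: (Qc (Aset D) 1 :|: (Qc (Aset D) 3 :|: Qc (Aset D) 7))).

Lemma sh_inj p c : injective (@sh c p).
Proof. by move=> x y; rewrite /sh; apply: addIr. Qed.

Lemma card_Pc p (B : {set 'I_(p.+2)}) c : #|Pc B c| = #|B|.
Proof. exact: (@card_preimset _ (@sh c p) B (@sh_inj p c)). Qed.
Lemma card_Qc p (A : {set 'I_(p.+2)}) c : #|Qc A c| = #|A|.
Proof. exact: card_imset _ (@sh_inj p c). Qed.

Lemma cardAB p (D : {set knodel_vertex p.+2}) : #|D| = #|Aset D| + #|Bset D|.
Proof.
rewrite -(cardsID [set x : knodel_vertex p.+2 | x.1] D) addnC.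
have -> : D :&: [set x | x.1] = [set (true, j) | j in Bset D].
  apply/setP => -[[] j]; rewrite !inE /= ?andbT ?andbF.
    apply/idP/imsetP => [h|[x]]; first by exists j; rewrite ?inE.
    by rewrite inE => hx [->].
  by apply/esym/imsetP => -[x].
have -> : D :\: [set x | x.1] = [set (false, j) | j in Aset D].
  apply/setP => -[[] j]; rewrite !inE /= ?andbT ?andbF.
    by apply/esym/imsetP => -[x].
  apply/idP/imsetP => [h|[x]]; first by exists j; rewrite ?inE.
  by rewrite inE => hx [->].
rewrite !card_imset //; by move=> x y [].
Qed.

Lemma cover1P p V (D : {set knodel_vertex p.+2}) j :
  dominating (@knodel_adj 4 p.+2) V D -> (false, j) \in V -> j \in cover1 D.
Proof.
case/andP=> _ /forall_inP H /H /orP[hD|/existsP[[[] j'] /andP[hw ha]]].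
  by rewrite /cover1 !in_setU inE hD.
  rewrite adjTF arcE in ha.
  rewrite /cover1 !in_setU !inE.
  by case/or4P: ha => /eqP E; rewrite -E hw ?orbT.
by [].
Qed.

Lemma cover2P p V (D : {set knodel_vertex p.+2}) j :
  dominating (@knodel_adj 4 p.+2) V D -> (true, j) \in V -> j \in cover2 D.
Proof.
case/andP=> _ /forall_inP H /H /orP[hD|/existsP[[[] j'] /andP[hw ha]]].
  by rewrite /cover2 !in_setU inE hD.
  by [].
rewrite adjFT arcE in ha.
have hA : j' \in Aset D by rewrite inE.
rewrite /cover2 !in_setU.
by case/or4P: ha => /eqP ->; rewrite imset_f ?orbT.
Qed.

Lemma cardU_le (T : finType) (A B : {set T}) : #|A :|: B| <= #|A| + #|B|.
Proof. by rewrite -cardsUI leq_addr. Qed.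

Lemma cardU_eq (T : finType) (A B : {set T}) x :
  #|A| + #|B| <= #|A :|: B| -> x \in A -> x \in B -> False.
Proof.
move=> h hA hB; have := cardsUI A B.
have : 0 < #|A :&: B| by apply/card_gt0P; exists x; rewrite inE hA hB.
lia.
Qed.

Lemma card5 (T : finType) (X1 X2 X3 X4 X5 : {set T}) :
  #|X1 :|: (X2 :|: (X3 :|: (X4 :|: X5)))| <= #|X1| + #|X2| + #|X3| + #|X4| + #|X5|.
Proof.
have := cardU_le X1 (X2 :|: (X3 :|: (X4 :|: X5))).
have := cardU_le X2 (X3 :|: (X4 :|: X5)).
have := cardU_le X3 (X4 :|: X5).
have := cardU_le X4 X5. lia.
Qed.

Lemma card5_disj (T : finType) (X1 X2 X3 X4 X5 : {set T}) x :
  #|X1| + #|X2| + #|X3| + #|X4| + #|X5| <= #|X1 :|: (X2 :|: (X3 :|: (X4 :|: X5)))| ->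
  (x \in X2 /\ x \in X3) \/ (x \in X2 /\ x \in X4) \/ (x \in X2 /\ x \in X5) \/
      (x \in X3 /\ x \in X4) \/ (x \in X3 /\ x \in X5) \/ (x \in X4 /\ x \in X5) -> False.
Proof.
move=> h.
have h1 := cardU_le X1 (X2 :|: (X3 :|: (X4 :|: X5))).
have h2 := cardU_le X2 (X3 :|: (X4 :|: X5)).
have h3 := cardU_le X3 (X4 :|: X5).
have h4 := cardU_le X4 X5.
have e2 : #|X2| + #|X3 :|: (X4 :|: X5)| <= #|X2 :|: (X3 :|: (X4 :|: X5))| by lia.
have e3 : #|X3| + #|X4 :|: X5| <= #|X3 :|: (X4 :|: X5)| by lia.
have e4 : #|X4| + #|X5| <= #|X4 :|: X5| by lia.
case=> [[a b]|[[a b]|[[a b]|[[a b]|[[a b]|[a b]]]]]].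
- by apply: (cardU_eq e2 a); rewrite !in_setU b.
- by apply: (cardU_eq e2 a); rewrite !in_setU b ?orbT.
- by apply: (cardU_eq e2 a); rewrite !in_setU b ?orbT.
- by apply: (cardU_eq e3 a); rewrite !in_setU b ?orbT.
- by apply: (cardU_eq e3 a); rewrite !in_setU b ?orbT.
- exact: (cardU_eq e4 a b).
Qed.

Lemma natr_neq0 p c : 0 < c < p.+2 -> (c%:R : 'I_(p.+2))%R != 0%R.
Proof.
case/andP=> h1 h2; apply/eqP => /(congr1 val); rewrite valZn modn_small //= => E.
by rewrite E in h1.
Qed.

Lemma neq_add p (w c : 'I_(p.+2)) : c != 0%R -> w != (w + c)%R.
Proof.
apply: contra => /eqP h; apply/eqP; apply: (@addrI _ w); by rewrite addr0 -h.
Qed.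

Lemma KL p (X : {set 'I_(p.+2)}) :
  2 < p.+2 -> #|X| * 5 + 2 = p.+2 ->
  (forall x y, x \in X -> y \in X -> forall d, d \in [:: 1; 2; 3; 4; 6; 7] -> y != (x + d%:R)%R) ->
  False.
Proof.
move=> hm hc H.
pose f (q : 'I_(p.+2) * 'I_5) : 'I_(p.+2) := (q.1 + (val q.2)%:R)%R.
pose P := f @: setX X [set: 'I_5].
have cP : #|P| = #|X| * 5.
  rewrite card_in_imset ?cardsX ?cardsT ?card_ord //.
  have key : forall x y (i j : 'I_5), x \in X -> y \in X -> i <= j ->
      (x + (val i)%:R = y + (val j)%:R)%R -> x = y /\ i = j.
    move=> x y i j hx hy hij E.
    have E2 : x = (y + (j - i)%:R)%R.
      apply: (@addIr _ ((val i)%:R)%R); rewrite E -addrA -natrD subnK //.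
    have : j - i < 5 by have := ltn_ord j; lia.
    case hd: (j - i) => [|d] hd5.
      have eij : i = j by apply/val_inj/eqP; rewrite eqn_leq hij /=; lia.
      by split => //; rewrite E2 hd addr0.
    exfalso; have := H y x hy hx d.+1; rewrite -hd -E2 eqxx /=; rewrite hd.
    by case: d hd hd5 => [|[|[|[|d]]]] // _ _ /(_ isT).
  move=> [x i] [y j]; rewrite !inE /= => /andP[hx _] /andP[hy _]; rewrite /f /= => E.
  case: (leqP i j) => hij.
    by case: (key x y i j hx hy hij E) => -> ->.
  by case: (key y x j i hy hx (ltnW hij) (esym E)) => -> ->.
pose U := ~: P.
have cU : #|U| = 2 by rewrite /U; have := cardsC P; rewrite card_ord cP; lia.
have inU : forall z, (z \in U) = [forall i : 'I_5, (z - (val i)%:R)%R \notin X].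
  move=> z; rewrite inE; apply/idP/forallP.
    move=> hz i; apply/negP => hx; apply: (negP hz); apply/imsetP.
    by exists ((z - (val i)%:R)%R, i); [rewrite !inE hx | rewrite /f /= subrK].
  move=> hall; apply/imsetP => -[[x i]]; rewrite !inE /= => /andP[hx _] E.
  by move: (hall i); rewrite E /f /= addrK hx.
have inU5 : forall z, (z \in U) = [&& (z - 0%:R)%R \notin X, (z - 1%:R)%R \notin X,
    (z - 2%:R)%R \notin X, (z - 3%:R)%R \notin X & (z - 4%:R)%R \notin X].
  move=> z; rewrite inU; apply/forallP/and5P.
    move=> h; split; [exact: (h (@Ordinal 5 0 isT)) | exact: (h (@Ordinal 5 1 isT))
      | exact: (h (@Ordinal 5 2 isT)) | exact: (h (@Ordinal 5 3 isT)) | exact: (h (@Ordinal 5 4 isT))].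
  by case=> h0 h1 h2 h3 h4 [[|[|[|[|[|i]]]]] hi].
have memE : forall a b, a = b -> (a \in X) = (b \in X) by move=> a b ->.
have claim : forall z, z \in U -> (z + 1%:R)%R \in U \/ ((z - 1%:R)%R \in U /\ (z - 2%:R)%R \in U).
  move=> z; rewrite inU5 => /and5P[h0 h1 h2 h3 h4].
  case: (boolP ((z + 1%:R)%R \in U)) => hz1; first by left.
  right.
  have hz1X : (z + 1%:R)%R \in X.
    move: hz1; rewrite inU5 => /and5P; case: (boolP ((z + 1%:R - 0%:R)%R \in X)).
      by rewrite (memE _ (z + 1%:R)%R) //; ring.
    move=> _ [].
    rewrite (memE _ (z - 0%:R)%R); last ring. rewrite h0 /=.
    rewrite (memE _ (z - 1%:R)%R); last ring. rewrite h1 /=.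
    rewrite (memE _ (z - 2%:R)%R); last ring. rewrite h2 /=.
    rewrite (memE _ (z - 3%:R)%R); last ring. by rewrite h3.
  have h5 : (z - 5%:R)%R \notin X.
    apply/negP => hx; have := H _ _ hx hz1X 6 isT.
    by rewrite (_ : (z - 5%:R + 6%:R = z + 1%:R)%R) ?eqxx //; ring.
  have h6 : (z - 6%:R)%R \notin X.
    apply/negP => hx; have := H _ _ hx hz1X 7 isT.
    by rewrite (_ : (z - 6%:R + 7%:R = z + 1%:R)%R) ?eqxx //; ring.
  split; rewrite inU5; apply/and5P; split.
  all: try (rewrite (memE _ (z - 1%:R)%R); [done|ring]).
  all: try (rewrite (memE _ (z - 2%:R)%R); [done|ring]).
  all: try (rewrite (memE _ (z - 3%:R)%R); [done|ring]).
  all: try (rewrite (memE _ (z - 4%:R)%R); [done|ring]).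
  all: try (rewrite (memE _ (z - 5%:R)%R); [done|ring]).
  all: try (rewrite (memE _ (z - 6%:R)%R); [done|ring]).
have [z hz] : exists z, z \in U by apply/card_gt0P; rewrite cU.
have [w [hw0 hw1 hw2]] : exists w, [/\ w \in U, (w + 1%:R)%R \in U & (w + 2%:R)%R \in U].
  have memU : forall a b, a = b -> (a \in U) = (b \in U) by move=> a b ->.
  case: (claim z hz) => [h1|[h1 h2]].
    case: (claim _ h1) => [h2|[h2 h3]].
      exists z; split => //; rewrite (memU _ (z + 1%:R + 1%:R)%R) //; ring.
    exists (z - 1%:R)%R; split.
    - rewrite (memU _ (z + 1%:R - 2%:R)%R) //; ring.
    - rewrite (memU _ z) //; ring.
    - rewrite (memU _ (z + 1%:R)%R) //; ring.
  exists (z - 2%:R)%R; split => //.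
    rewrite (memU _ (z - 1%:R)%R) //; ring.
  rewrite (memU _ z) //; ring.
have : #|w |: ((w + 1%:R)%R |: [set (w + 2%:R)%R])| <= #|U|.
  apply: subset_leq_card; apply/subsetP => x hx.
  have : [|| x == w, x == (w + 1%:R)%R | x == (w + 2%:R)%R] by move: hx; rewrite !inE.
  by case/or3P => /eqP->.
have n1 : (1%:R : 'I_(p.+2))%R != 0%R by apply: natr_neq0.
have n2 : (2%:R : 'I_(p.+2))%R != 0%R by apply: natr_neq0; rewrite /=; lia.
have n3 : (w + 1%:R)%R != (w + 2%:R)%R.
  have -> : ((w + 2%:R) = (w + 1%:R) + 1%:R)%R by ring.
  exact: neq_add.
rewrite cU !cardsU1 cards1 !inE (negbTE (neq_add w n1)) (negbTE (neq_add w n2)) (negbTE n3).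
by [].
Qed.

Lemma card_cover1 p (D : {set knodel_vertex p.+2}) : #|cover1 D| <= #|Aset D| + 4 * #|Bset D|.
Proof. rewrite /cover1; apply: leq_trans (card5 _ _ _ _ _) _; rewrite !card_Pc; lia. Qed.
Lemma card_cover2 p (D : {set knodel_vertex p.+2}) : #|cover2 D| <= #|Bset D| + 4 * #|Aset D|.
Proof. rewrite /cover2; apply: leq_trans (card5 _ _ _ _ _) _; rewrite !card_Qc; lia. Qed.

Lemma covers p (V D : {set knodel_vertex p.+2}) b0 i0 :
  (forall v, v != (b0, i0) -> v \in V) -> dominating (@knodel_adj 4 p.+2) V D ->
  (if b0 then p.+2 else p.+1) <= #|cover1 D| /\ (if b0 then p.+1 else p.+2) <= #|cover2 D|.
Proof.
move=> HV HD.
have full1 : b0 -> p.+2 <= #|cover1 D|.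
  move=> hb; apply: leq_trans (subset_leq_card (_ : [set: 'I_(p.+2)] \subset cover1 D)); first by rewrite cardsT card_ord.
  apply/subsetP => j _; apply: (cover1P HD); apply: HV; by rewrite xpair_eqE hb.
have full2 : ~~ b0 -> p.+2 <= #|cover2 D|.
  move=> hb; apply: leq_trans (subset_leq_card (_ : [set: 'I_(p.+2)] \subset cover2 D)); first by rewrite cardsT card_ord.
  apply/subsetP => j _; apply: (cover2P HD); apply: HV; by rewrite xpair_eqE (negbTE hb).
have part1 : p.+1 <= #|cover1 D|.
  apply: leq_trans (subset_leq_card (_ : [set~ i0] \subset cover1 D)); first by rewrite cardsC1 card_ord.
  apply/subsetP => j; rewrite in_setC1 => hj.
  apply: (cover1P HD); apply: HV; by rewrite xpair_eqE (negbTE hj) andbF.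
have part2 : p.+1 <= #|cover2 D|.
  apply: leq_trans (subset_leq_card (_ : [set~ i0] \subset cover2 D)); first by rewrite cardsC1 card_ord.
  apply/subsetP => j; rewrite in_setC1 => hj.
  apply: (cover2P HD); apply: HV; by rewrite xpair_eqE (negbTE hj) andbF.
by clear HV HD; move: full1 full2; case: b0 => h1 h2; split => //; [exact: h1 | exact: h2].
Qed.

Lemma LB1 p t (V D : {set knodel_vertex p.+2}) u :
  p.+2 = t * 5 -> (forall v, v != u -> v \in V) -> dominating (@knodel_adj 4 p.+2) V D ->
  2 * t <= #|D|.
Proof.
case: u => b0 i0 hm HV HD; have [c1 c2] := covers HV HD.
have := card_cover1 D; have := card_cover2 D; rewrite cardAB.
clear HV HD; move: c1 c2; case: b0 => c1 c2; lia.
Qed.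

Lemma memE (T : finType) (B : {set T}) a b : a = b -> (a \in B) = (b \in B).
Proof. by move->. Qed.

Lemma LB2 p k (V D : {set knodel_vertex p.+2}) u :
  p.+2 = k * 5 + 2 -> 2 < p.+2 -> (forall v, v != u -> v \in V) ->
  dominating (@knodel_adj 4 p.+2) V D -> 2 * k + 2 <= #|D|.
Proof.
case: u => b0 i0 hm hm2 HV HD; have [c1 c2] := covers HV HD.
have e1 := card_cover1 D; have e2 := card_cover2 D.
rewrite cardAB; rewrite leqNgt; apply/negP => hlt.
clear HV HD; move: c1 c2; case: b0 => c1 c2.
- (* u on side 2 : A is "perfect" *)
  have hA : #|Aset D| = k by lia.
  have hS : #|Bset D| + #|Qc (Aset D) 0| + #|Qc (Aset D) 1| + #|Qc (Aset D) 3| + #|Qc (Aset D) 7|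
      <= #|cover2 D| by rewrite !card_Qc; lia.
  apply: (@KL p (Aset D)) => //; first by rewrite hA.
  move=> x y hx hy d hd; apply/negP => /eqP E.
  have inQ : forall c a z, a \in Aset D -> z = sh c a -> z \in Qc (Aset D) c.
    by move=> c a z ha ->; apply: imset_f.
  move: hd; rewrite !inE => /orP[/eqP hd|/orP[/eqP hd|/orP[/eqP hd|/orP[/eqP hd|/orP[/eqP hd|/eqP hd]]]]]; subst d.
  + apply: (card5_disj (x := sh 1 x) hS); left; split.
      by apply: (inQ _ y) => //; rewrite /sh E; ring.
    by apply: (inQ _ x).
  + apply: (card5_disj (x := sh 3 x) hS); right; right; right; left; split.
      by apply: (inQ _ y) => //; rewrite /sh E; ring.
    by apply: (inQ _ x).
  + apply: (card5_disj (x := sh 3 x) hS); right; left; split.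
      by apply: (inQ _ y) => //; rewrite /sh E; ring.
    by apply: (inQ _ x).
  + apply: (card5_disj (x := sh 7 x) hS); right; right; right; right; right; split.
      by apply: (inQ _ y) => //; rewrite /sh E; ring.
    by apply: (inQ _ x).
  + apply: (card5_disj (x := sh 7 x) hS); right; right; right; right; left; split.
      by apply: (inQ _ y) => //; rewrite /sh E; ring.
    by apply: (inQ _ x).
  + apply: (card5_disj (x := sh 7 x) hS); right; right; left; split.
      by apply: (inQ _ y) => //; rewrite /sh E; ring.
    by apply: (inQ _ x).
- (* u on side 1 : B is "perfect" *)
  have hB : #|Bset D| = k by lia.
  have hS : #|Aset D| + #|Pc (Bset D) 0| + #|Pc (Bset D) 1| + #|Pc (Bset D) 3| + #|Pc (Bset D) 7|
      <= #|cover1 D| by rewrite !card_Pc; lia.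
  apply: (@KL p (Bset D)) => //; first by rewrite hB.
  move=> x y hx hy d hd; apply/negP => /eqP E.
  have inP : forall c a z, a \in Bset D -> sh c z = a -> z \in Pc (Bset D) c.
    by move=> c a z ha hz; rewrite inE hz.
  move: hd; rewrite !inE => /orP[/eqP hd|/orP[/eqP hd|/orP[/eqP hd|/orP[/eqP hd|/orP[/eqP hd|/eqP hd]]]]]; subst d.
  + apply: (card5_disj (x := x) hS); left; split.
      by apply: (inP _ x) => //; rewrite /sh; ring.
    by apply: (inP _ y) => //; rewrite /sh E; ring.
  + apply: (card5_disj (x := (x - 1%:R)%R) hS); right; right; right; left; split.
      by apply: (inP _ x) => //; rewrite /sh; ring.
    by apply: (inP _ y) => //; rewrite /sh E; ring.
  + apply: (card5_disj (x := x) hS); right; left; split.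
      by apply: (inP _ x) => //; rewrite /sh; ring.
    by apply: (inP _ y) => //; rewrite /sh E; ring.
  + apply: (card5_disj (x := (x - 3%:R)%R) hS); right; right; right; right; right; split.
      by apply: (inP _ x) => //; rewrite /sh; ring.
    by apply: (inP _ y) => //; rewrite /sh E; ring.
  + apply: (card5_disj (x := (x - 1%:R)%R) hS); right; right; right; right; left; split.
      by apply: (inP _ x) => //; rewrite /sh; ring.
    by apply: (inP _ y) => //; rewrite /sh E; ring.
  + apply: (card5_disj (x := x) hS); right; right; left; split.
      by apply: (inP _ x) => //; rewrite /sh; ring.
    by apply: (inP _ y) => //; rewrite /sh E; ring.
Qed.

Lemma adjT p (j : 'I_(p.+2)) s : s \in [:: 0; 1; 3; 7] -> @knodel_adj 4 p.+2 (true, sh s j) (false, j).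
Proof. by rewrite adjTF arcE !inE => /or4P[] /eqP->; rewrite eqxx ?orbT. Qed.

Lemma adjF p (j : 'I_(p.+2)) s : s \in [:: 0; 1; 3; 7] -> @knodel_adj 4 p.+2 (false, (j - s%:R)%R) (true, j).
Proof. move=> hs; have := adjT (j - s%:R)%R hs; rewrite adjTF adjFT /sh subrK. by []. Qed.

Lemma dom_crit p (D : {set knodel_vertex p.+2}) :
  (forall j, (false, j) \in D \/ exists2 s, s \in [:: 0; 1; 3; 7] & (true, sh s j) \in D) ->
  (forall j, (true, j) \in D \/ exists2 s, s \in [:: 0; 1; 3; 7] & (false, (j - s%:R)%R) \in D) ->
  dominating (@knodel_adj 4 p.+2) [set: knodel_vertex p.+2] D.
Proof.
move=> H1 H2; apply/andP; split; first exact: subsetT.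
apply/forall_inP => -[[] j] _.
  case: (H2 j) => [->//|[s hs hD]]; apply/orP; right; apply/existsP; exists (false, (j - s%:R)%R).
  by rewrite hD adjF.
case: (H1 j) => [->//|[s hs hD]]; apply/orP; right; apply/existsP; exists (true, sh s j).
by rewrite hD adjT.
Qed.

Lemma dom_shift p (D : {set knodel_vertex p.+2}) (c : 'I_(p.+2)) :
  dominating (@knodel_adj 4 p.+2) [set: knodel_vertex p.+2] D ->
  dominating (@knodel_adj 4 p.+2) [set: knodel_vertex p.+2] [set (x.1, (x.2 + c)%R) | x in D].
Proof.
case/andP => _ /forall_inP H; apply/andP; split; first exact: subsetT.
apply/forall_inP => -[b j] _.
have [hD|/existsP[[b' j'] /andP[hw ha]]] := orP (H (b, (j - c)%R) (in_setT _)).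
  apply/orP; left; apply/imsetP; exists (b, (j - c)%R) => //=; by rewrite subrK.
apply/orP; right; apply/existsP; exists (b', (j' + c)%R).
have hm : (b', (j' + c)%R) \in [set (x.1, (x.2 + c)%R) | x in D] by apply/imsetP; exists (b', j').
rewrite hm andTb.
have -> : j = ((j - c) + c)%R by rewrite subrK.
by rewrite adj_sh.
Qed.

Lemma wrapP a m : a < 2 * m -> (a %% m = a /\ a < m) \/ (a %% m = a - m /\ m <= a).
Proof.
move=> h; case: (ltnP a m) => h2; first by left; rewrite modn_small.
right; split => //; rewrite -{1}(subnK h2) modnDr modn_small //; lia.
Qed.

Lemma valsh p c (j : 'I_(p.+2)) : val (sh c j) = (j + c) %% p.+2.
Proof. exact: valDn. Qed.

Definition D1 p : {set knodel_vertex p.+2} :=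
  [set x | if x.1 then val x.2 %% 5 == 4 else val x.2 %% 5 == 0].
Definition D2 p : {set knodel_vertex p.+2} :=
  [set x | if x.1 then (val x.2 %% 5 == 4) || (val x.2 == 2) else val x.2 %% 5 == 0].

Lemma inD1T p (j : 'I_(p.+2)) : ((true, j) \in D1 p) = ((j : nat) %% 5 == 4). Proof. by rewrite inE. Qed.
Lemma inD1F p (j : 'I_(p.+2)) : ((false, j) \in D1 p) = ((j : nat) %% 5 == 0). Proof. by rewrite inE. Qed.
Lemma inD2T p (j : 'I_(p.+2)) : ((true, j) \in D2 p) = ((j : nat) %% 5 == 4) || ((j : nat) == 2). Proof. by rewrite inE. Qed.
Lemma inD2F p (j : 'I_(p.+2)) : ((false, j) \in D2 p) = ((j : nat) %% 5 == 0). Proof. by rewrite inE. Qed.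

Lemma dom_D1 p t : p.+2 = t * 5 -> 8 <= p.+2 -> dominating (@knodel_adj 4 p.+2) setT (D1 p).
Proof.
move=> hm h8; apply: dom_crit => j; rewrite ?inD1T ?inD1F; have hj := ltn_ord j.
- case E: ((j : nat) %% 5) => [|[|[|[|[|r]]]]]; first by left.
  + right; exists 3 => //; rewrite inD1T valsh; case: (@wrapP (j + 3) p.+2 _) => [|[-> h]|[-> h]]; try lia; apply/eqP; lia.
  + right; exists 7 => //; rewrite inD1T valsh; case: (@wrapP (j + 7) p.+2 _) => [|[-> h]|[-> h]]; try lia; apply/eqP; lia.
  + right; exists 1 => //; rewrite inD1T valsh; case: (@wrapP (j + 1) p.+2 _) => [|[-> h]|[-> h]]; try lia; apply/eqP; lia.
  + right; exists 0 => //; rewrite inD1T valsh; case: (@wrapP (j + 0) p.+2 _) => [|[-> h]|[-> h]]; try lia; apply/eqP; lia.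
  + have := ltn_pmod j (isT : 0 < 5); lia.
- case E: ((j : nat) %% 5) => [|[|[|[|[|r]]]]].
  + right; exists 0 => //; rewrite inD1F valBn //; case: (@wrapP (j + (p.+2 - 0)) p.+2 _) => [|[-> h]|[-> h]]; try lia; apply/eqP; lia.
  + right; exists 1 => //; rewrite inD1F valBn //; case: (@wrapP (j + (p.+2 - 1)) p.+2 _) => [|[-> h]|[-> h]]; try lia; apply/eqP; lia.
  + right; exists 7 => //; rewrite inD1F valBn; last lia; case: (@wrapP (j + (p.+2 - 7)) p.+2 _) => [|[-> h]|[-> h]]; try lia; apply/eqP; lia.
  + right; exists 3 => //; rewrite inD1F valBn; last lia; case: (@wrapP (j + (p.+2 - 3)) p.+2 _) => [|[-> h]|[-> h]]; try lia; apply/eqP; lia.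
  + by left.
  + have := ltn_pmod j (isT : 0 < 5); lia.
Qed.

Lemma dom_D2 p k : p.+2 = k * 5 + 2 -> 8 <= p.+2 -> dominating (@knodel_adj 4 p.+2) setT (D2 p).
Proof.
move=> hm h8; apply: dom_crit => j; rewrite ?inD2T ?inD2F; have hj := ltn_ord j.
- case E: ((j : nat) %% 5) => [|[|[|[|[|r]]]]]; first by left.
  + right; exists 3 => //; rewrite inD2T valsh; case: (@wrapP (j + 3) p.+2 _) => [|[-> h]|[-> h]]; try lia; apply/orP; first [by left; apply/eqP; lia | by right; apply/eqP; lia].
  + right; exists 7 => //; rewrite inD2T valsh; case: (@wrapP (j + 7) p.+2 _) => [|[-> h]|[-> h]]; try lia; apply/orP; first [by left; apply/eqP; lia | by right; apply/eqP; lia].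
  + right; exists 1 => //; rewrite inD2T valsh; case: (@wrapP (j + 1) p.+2 _) => [|[-> h]|[-> h]]; try lia; apply/orP; first [by left; apply/eqP; lia | by right; apply/eqP; lia].
  + right; exists 0 => //; rewrite inD2T valsh; case: (@wrapP (j + 0) p.+2 _) => [|[-> h]|[-> h]]; try lia; apply/orP; first [by left; apply/eqP; lia | by right; apply/eqP; lia].
  + have := ltn_pmod j (isT : 0 < 5); lia.
- have [e2|/eqP ne2] := eqVneq (j : nat) 2; first by left; rewrite e2 orbT.
  case E: ((j : nat) %% 5) => [|[|[|[|[|r]]]]].
  + right; exists 0 => //; rewrite inD2F valBn //; case: (@wrapP (j + (p.+2 - 0)) p.+2 _) => [|[-> h]|[-> h]]; try lia; apply/eqP; lia.
  + right; exists 1 => //; rewrite inD2F valBn //; case: (@wrapP (j + (p.+2 - 1)) p.+2 _) => [|[-> h]|[-> h]]; try lia; apply/eqP; lia.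
  + right; exists 7 => //; rewrite inD2F valBn; last lia; case: (@wrapP (j + (p.+2 - 7)) p.+2 _) => [|[-> h]|[-> h]]; try lia; apply/eqP; lia.
  + right; exists 3 => //; rewrite inD2F valBn; last lia; case: (@wrapP (j + (p.+2 - 3)) p.+2 _) => [|[-> h]|[-> h]]; try lia; apply/eqP; lia.
  + by left.
  + have := ltn_pmod j (isT : 0 < 5); lia.
Qed.

Lemma win5 a r : r < 5 -> count (fun j => j %% 5 == r) (iota a 5) = 1.
Proof.
move=> hr; rewrite (divn_eq a 5); have : a %% 5 < 5 by rewrite ltn_mod.
move: (a %/ 5) (a %% 5) => q x hx /=.
rewrite -!addnS !modnMDl.
by case: x hx => [|[|[|[|[|x]]]]] //; case: r hr => [|[|[|[|[|r]]]]].
Qed.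

Lemma cnt5 q e r : r < 5 -> e <= 5 -> count (fun j => j %% 5 == r) (iota 0 (q * 5 + e)) = q + (r < e).
Proof.
move=> hr he; elim: q => [|q IH].
  by case: e he => [|[|[|[|[|[|e]]]]]] //; case: r hr => [|[|[|[|[|r]]]]].
have -> : q.+1 * 5 + e = (q * 5 + e) + 5 by lia.
by rewrite iotaD count_cat IH win5 //; lia.
Qed.

Lemma card_res p r : r < 5 -> #|[set j : 'I_(p.+2) | (j : nat) %% 5 == r]| = count (fun j => j %% 5 == r) (iota 0 p.+2).
Proof. move=> _; exact: (card_ordP _ (fun j => j %% 5 == r)). Qed.

Lemma card_D1 p t : p.+2 = t * 5 -> #|D1 p| <= 2 * t.
Proof.
move=> hm; rewrite cardAB.
have -> : Aset (D1 p) = [set j : 'I_(p.+2) | (j : nat) %% 5 == 0] by apply/setP => j; rewrite !inE.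
have -> : Bset (D1 p) = [set j : 'I_(p.+2) | (j : nat) %% 5 == 4] by apply/setP => j; rewrite !inE.
rewrite !card_res // hm -[t * 5]addn0 !cnt5 //; lia.
Qed.

Lemma card_D2 p k : p.+2 = k * 5 + 2 -> 8 <= p.+2 -> #|D2 p| <= 2 * k + 2.
Proof.
move=> hm h8; rewrite cardAB.
have -> : Aset (D2 p) = [set j : 'I_(p.+2) | (j : nat) %% 5 == 0] by apply/setP => j; rewrite !inE.
have hB : Bset (D2 p) \subset (2%:R : 'I_(p.+2))%R |: [set j : 'I_(p.+2) | (j : nat) %% 5 == 4].
  apply/subsetP => j; rewrite !inE => /orP[->|/eqP e2]; first by rewrite orbT.
  apply/orP; left; apply/eqP/val_inj; rewrite valZn modn_small; [exact: e2|lia].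
have := subset_leq_card hB; rewrite cardsU1.
have c0 : count (fun j => j %% 5 == 0) (iota 0 p.+2) = k + 1 by rewrite hm cnt5.
have c4 : count (fun j => j %% 5 == 4) (iota 0 p.+2) = k by rewrite hm cnt5 // addn0.
rewrite !card_res // c0 c4.
have := leq_b1 ((2%:R : 'I_(p.+2))%R \notin [set j : 'I_(p.+2) | (j : nat) %% 5 == 4]). lia.
Qed.

Lemma stable_of p g (D0 : {set knodel_vertex p.+2}) :
  dominating (@knodel_adj 4 p.+2) setT D0 -> #|D0| <= g ->
  (false, (1%:R : 'I_(p.+2))%R) \notin D0 -> (true, (0%:R : 'I_(p.+2))%R) \notin D0 ->
  (forall (V D : {set knodel_vertex p.+2}) u, (forall v, v != u -> v \in V) ->
     dominating (@knodel_adj 4 p.+2) V D -> g <= #|D|) ->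
  gamma_stable (@knodel_adj 4 p.+2).
Proof.
move=> HD hc n1 n0 LB [b0 i0].
have [w hw] : exists w : 'I_(p.+2), (b0, w) \notin D0.
  by clear LB; case: b0; [exists 0%:R%R | exists 1%:R%R].
pose c := (i0 - w)%R.
pose D := [set (x.1, (x.2 + c)%R) | x in D0].
have HD' := dom_shift c HD.
have hD : #|D| <= g by apply: leq_trans (leq_imset_card _ _) hc.
have hu : (b0, i0) \notin D.
  apply/imsetP => -[[b y] hy [eb ey]]; subst b.
  have ew : y = w by apply: (@addIr _ c); rewrite /= -ey /c; ring.
  by move: hy; rewrite ew (negbTE hw).
have g1 : gamma (@knodel_adj 4 p.+2) setT <= g := leq_trans (gamma_le HD') hD.
have g2 : gamma (@knodel_adj 4 p.+2) (setT :\ (b0, i0)) <= g := leq_trans (gamma_le (dom_minus HD' hu)) hD.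
have g3 : g <= gamma (@knodel_adj 4 p.+2) setT.
  by apply: gamma_ge => D1 hd; apply: (LB _ _ (b0, i0)) hd => v _; rewrite inE.
have g4 : g <= gamma (@knodel_adj 4 p.+2) (setT :\ (b0, i0)).
  by apply: gamma_ge => D1 hd; apply: (LB _ _ (b0, i0)) hd => v hv; rewrite !inE hv.
lia.
Qed.

Theorem lemma4p2 (n : nat) :
  16 <= n -> ~~ odd n -> (n %% 10 = 0 \/ n %% 10 = 4) ->
  gamma_stable (knodel_graph_W 4 n).
Proof.
move=> h16 hodd hmod; rewrite /knodel_graph_W.
have hn : n = n./2 * 2.
  by have := odd_double_half n; rewrite (negbTE hodd) -muln2 add0n => ->.
move: (n./2) hn => m hn.
have [p hp] : exists p, m = p.+2 by exists (m - 2); lia.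
subst m.
have h8 : 8 <= p.+2 by lia.
case: hmod => hmod.
- have ht : p.+2 = (p.+2 %/ 5) * 5 by lia.
  apply: (stable_of (dom_D1 ht h8) (card_D1 ht)).
  + by rewrite inD1F valZn modn_small.
  + by rewrite inD1T valZn modn_small.
  + by move=> V D u hV hD; apply: (LB1 ht hV hD).
- have ht : p.+2 = (p.+2 %/ 5) * 5 + 2 by lia.
  apply: (stable_of (dom_D2 ht h8) (card_D2 ht h8)).
  + by rewrite inD2F valZn modn_small.
  + by rewrite inD2T valZn modn_small.
  + move=> V D u hV hD; apply: (LB2 ht _ hV hD); lia.
Qed.
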